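(* Let $\kappa:[-1,1]\to\mathbb{R}$ be given by $\kappa(t)=\sum_{q\ge 0}\frac{J_q^2}{q!}t^q$, where $J_q\in\mathbb{R}$, $J_q\neq 0$ for infinitely many $q$, $\sum_{q\ge1}\frac{|J_q|}{(q-1)!}<\infty$ (so that $\kappa\in C^1([-1,1])$), and $\kappa(1)=1$. For $L\ge1$ let $\kappa_L=\kappa\circ\cdots\circ\kappa$ ($L$ times). Assume $\kappa'(1)<1$. Then for every $t\in[-1,1]$ the limit \[ \mathfrak{L}(t)=\lim_{L\to\infty}(\kappa'(1))^{-L}\bigl(1-\kappa_L(t)\bigr) \] exists in $[0,\infty)$. Moreover, if in addition there exist $c\in\mathbb{R}\setminus\{0\}$ and $\rho>1$ such that \[ 1-\kappa(t)=\kappa'(1)(1-t)-c(1-t)^{\rho}+o\bigl((1-t)^{\rho}\bigr)\quad\text{as } t\to1^-, \] then $\mathfrak{L}(t)=0$ if and only if $t\in\mathcal{I}(\kappa):=\{s\in[-1,1]:\kappa(s)=1\}$. *)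

(* Defs.v *)
From Stdlib Require Import Reals Factorial.
From Coquelicot Require Import Coquelicot.
Open Scope R_scope.

Definition kappa (J : nat -> R) (t : R) : R :=
  Series (fun q => J q ^ 2 / INR (fact q) * t ^ q).

Definition kappa_iter (J : nat -> R) (L : nat) (t : R) : R :=
  Nat.iter L (kappa J) t.

(* Main.v *)
Require Import Defs.
From Stdlib Require Import Reals Factorial Lra Lia.
From Coquelicot Require Import Coquelicot.
Open Scope R_scope.

Definition aJ (J : nat -> R) (q : nat) : R := J q ^ 2 / INR (fact q).

Lemma aJ_nonneg J q : 0 <= aJ J q.
Proof.
  unfold aJ. apply Rmult_le_pos. apply pow2_ge_0.
  apply Rlt_le, Rinv_0_lt_compat, INR_fact_lt_0.
Qed.

Lemma pow_bnd s q : -1 <= s <= 1 -> -1 <= s ^ q <= 1.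
Proof.
  intros Hs. assert (H : Rabs (s ^ q) <= 1).
  { rewrite <- RPow_abs. rewrite <- (pow1 q). apply pow_incr.
    split. apply Rabs_pos. apply Rabs_le. lra. }
  apply Rabs_le_between in H. lra.
Qed.

Lemma Series_zero : Series (fun _ => 0) = 0.
Proof.
  rewrite (Series_ext _ (fun n => 0 * 0)) by (intros; ring).
  rewrite Series_scal_l. ring.
Qed.

Lemma Series_nonneg b : (forall n, 0 <= b n) -> ex_series b -> 0 <= Series b.
Proof.
  intros Hb He. pose proof (Series_le (fun _ => 0) b) as L. rewrite Series_zero in L.
  apply L; auto. intros n; split; [lra | auto].
Qed.

Lemma Series_ge_term b k : (forall n, 0 <= b n) -> ex_series b -> b k <= Series b.
Proof.
  intros Hb He. rewrite (Series_incr_n b (S k)) by (auto with arith).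
  simpl Init.Nat.pred.
  assert (0 <= Series (fun j => b (S k + j)%nat)).
  { apply Series_nonneg. auto. apply (ex_series_incr_n b (S k)). auto. }
  assert (b k <= sum_f_R0 b k).
  { destruct k as [|k]. simpl. lra.
    simpl. assert (0 <= sum_f_R0 b k) by (apply cond_pos_sum; auto). lra. }
  lra.
Qed.

Lemma ex_aJ J : is_series (aJ J) 1 -> ex_series (aJ J).
Proof. intros H. exists 1. exact H. Qed.

Lemma ex_aJs J s : is_series (aJ J) 1 -> -1 <= s <= 1 ->
  ex_series (fun q => aJ J q * s ^ q).
Proof.
  intros H Hs. apply (@ex_series_le R_AbsRing R_CompleteNormedModule _ (aJ J)). 2: apply ex_aJ; auto.
  intros n. change (norm (aJ J n * s ^ n)) with (Rabs (aJ J n * s ^ n)).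
  rewrite Rabs_mult. rewrite (Rabs_right (aJ J n)) by (apply Rle_ge, aJ_nonneg).
  pose proof (aJ_nonneg J n). pose proof (pow_bnd s n Hs).
  assert (Rabs (s ^ n) <= 1) by (apply Rabs_le; lra).
  rewrite <- (Rmult_1_r (aJ J n)) at 2. apply Rmult_le_compat_l; auto.
Qed.

Lemma kappa_eq J s : kappa J s = Series (fun q => aJ J q * s ^ q).
Proof. reflexivity. Qed.

Lemma one_minus J s : is_series (aJ J) 1 -> -1 <= s <= 1 ->
  1 - kappa J s = Series (fun q => aJ J q * (1 - s ^ q)).
Proof.
  intros H Hs. rewrite kappa_eq.
  rewrite (Series_ext (fun q => aJ J q * (1 - s ^ q)) (fun q => aJ J q - aJ J q * s ^ q)) by (intros; ring).
  rewrite Series_minus. rewrite (is_series_unique _ _ H). ring.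
  apply ex_aJ; auto. apply ex_aJs; auto.
Qed.

Lemma ex_om J s : is_series (aJ J) 1 -> -1 <= s <= 1 ->
  ex_series (fun q => aJ J q * (1 - s ^ q)).
Proof.
  intros H Hs.
  apply (@ex_series_le R_AbsRing R_CompleteNormedModule _ (fun q => aJ J q * 2)).
  2: apply ex_series_scal_r, ex_aJ; auto.
  intros n. change (norm (aJ J n * (1 - s ^ n))) with (Rabs (aJ J n * (1 - s ^ n))).
  pose proof (aJ_nonneg J n). pose proof (pow_bnd s n Hs).
  rewrite Rabs_right. apply Rmult_le_compat_l; lra.
  apply Rle_ge, Rmult_le_pos; lra.
Qed.

Lemma om_nonneg J s q : -1 <= s <= 1 -> 0 <= aJ J q * (1 - s ^ q).
Proof. intros Hs. pose proof (pow_bnd s q Hs). apply Rmult_le_pos. apply aJ_nonneg. lra. Qed.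

Lemma kappa_le1 J s : is_series (aJ J) 1 -> -1 <= s <= 1 -> kappa J s <= 1.
Proof.
  intros H Hs. assert (0 <= 1 - kappa J s). rewrite one_minus; auto.
  apply Series_nonneg. intros; apply om_nonneg; auto. apply ex_om; auto. lra.
Qed.

Fixpoint hq (q : nat) (s : R) : R := match q with O => 0 | S q => 1 + s * hq q s end.

Lemma h_id q s : (1 - s) * hq q s = 1 - s ^ q.
Proof. induction q; simpl. ring.
  replace ((1-s)*(1+s*hq q s)) with ((1-s) + s*((1-s)*hq q s)) by ring.
  rewrite IHq. ring. Qed.

Lemma h_mono q s s' : 0 <= s <= s' -> 0 <= hq q s <= hq q s'.
Proof. intros Hs. induction q; simpl. lra. nra. Qed.

Lemma kappa1 J : is_series (aJ J) 1 -> kappa J 1 = 1.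
Proof.
  intros H. rewrite kappa_eq. rewrite (Series_ext _ (aJ J)). apply is_series_unique; auto.
  intros; rewrite pow1; ring.
Qed.

Lemma mono J s s' : is_series (aJ J) 1 -> 0 <= s -> s <= s' -> s' < 1 ->
  (1 - kappa J s) * (1 - s') <= (1 - kappa J s') * (1 - s).
Proof.
  intros H H0 H1 H2. rewrite !one_minus by (auto; lra).
  rewrite <- !Series_scal_r. apply Series_le.
  2: apply ex_series_scal_r, ex_om; auto; lra.
  intros q. rewrite <- !h_id. pose proof (h_mono q s s' (conj H0 H1)).
  pose proof (aJ_nonneg J q).
  assert (0 <= aJ J q * (1 - s) * (1 - s')) by (apply Rmult_le_pos; [apply Rmult_le_pos|]; lra).
  split. nra.
  replace (aJ J q * ((1 - s) * hq q s) * (1 - s')) with (aJ J q * (1 - s) * (1 - s') * hq q s) by ring.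
  replace (aJ J q * ((1 - s') * hq q s') * (1 - s)) with (aJ J q * (1 - s) * (1 - s') * hq q s') by ring.
  apply Rmult_le_compat_l; lra.
Qed.

Lemma le_kp J kp s : is_series (aJ J) 1 ->
  filterlim (fun s => (kappa J s - kappa J 1) / (s - 1)) (at_left 1) (locally kp) ->
  0 <= s <= 1 -> 1 - kappa J s <= kp * (1 - s).
Proof.
  intros H Hl Hs. destruct (Req_dec s 1) as [E|E].
  { subst. rewrite kappa1; auto. lra. }
  destruct (Rle_or_lt ((1 - kappa J s) / (1 - s)) kp) as [L|L].
  { apply Rmult_le_reg_r with (/ (1 - s)). apply Rinv_0_lt_compat; lra.
    rewrite Rmult_assoc, Rinv_r by lra. lra. }
  exfalso. set (eps := mkposreal _ (Rgt_minus _ _ L)).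
  specialize (Hl (ball kp eps) (locally_ball kp eps)).
  destruct Hl as [d Hd].
  set (y := Rmax s (1 - d / 2)).
  assert (Hy1 : y < 1). { unfold y. apply Rmax_lub_lt. lra. destruct d; simpl; lra. }
  assert (Hy2 : s <= y) by apply Rmax_l.
  assert (Hy3 : 1 - d/2 <= y) by apply Rmax_r.
  assert (B : ball 1 d y). { change (Rabs (y - 1) < d). destruct d as [d dp]; simpl in *.
    rewrite Rabs_left by lra. lra. }
  specialize (Hd y B Hy1). change (Rabs ((kappa J y - kappa J 1) / (y - 1) - kp) < eps) in Hd.
  simpl in Hd. rewrite kappa1 in Hd by auto.
  replace ((kappa J y - 1) / (y - 1)) with ((1 - kappa J y) / (1 - y)) in Hd by (field; lra).
  apply Rabs_def2 in Hd. destruct Hd as [Hd _].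
  pose proof (mono J s y H (proj1 Hs) Hy2 Hy1) as M.
  assert ((1 - kappa J s) / (1 - s) <= (1 - kappa J y) / (1 - y)).
  { unfold Rdiv. apply Rmult_le_reg_r with ((1 - s) * (1 - y)).
    apply Rmult_lt_0_compat; lra.
    replace ((1 - kappa J s) * / (1 - s) * ((1 - s) * (1 - y))) with ((1 - kappa J s) * (1 - y)) by (field; lra).
    replace ((1 - kappa J y) * / (1 - y) * ((1 - s) * (1 - y))) with ((1 - kappa J y) * (1 - s)) by (field; lra).
    exact M. }
  lra.
Qed.

Lemma neg_part J s : is_series (aJ J) 1 -> -1 <= s <= 0 ->
  1 - kappa J s <= (1 - kappa J 0) * (1 - s).
Proof.
  intros H Hs. rewrite !one_minus by (auto; lra).
  rewrite <- Series_scal_r. apply Series_le.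
  2: apply ex_series_scal_r, ex_om; auto; lra.
  intros q. split. apply om_nonneg; lra.
  pose proof (aJ_nonneg J q). destruct q as [|q].
  simpl. lra.
  pose proof (pow_bnd s q ltac:(lra)).
  replace (0 ^ S q) with 0 by (simpl; ring). simpl.
  assert (s <= s * s ^ q) by nra. nra.
Qed.

Lemma key J kp s : is_series (aJ J) 1 ->
  filterlim (fun s => (kappa J s - kappa J 1) / (s - 1)) (at_left 1) (locally kp) ->
  -1 <= s <= 1 -> 1 - kappa J s <= kp * (1 - s).
Proof.
  intros H Hl Hs. destruct (Rle_or_lt 0 s).
  apply le_kp; auto; lra.
  pose proof (neg_part J s H ltac:(lra)). pose proof (le_kp J kp 0 H Hl ltac:(lra)).
  nra.
Qed.

Lemma pow_lt1 s q : Rabs s < 1 -> (1 <= q)%nat -> s ^ q < 1.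
Proof.
  intros Hs Hq. destruct q as [|q]. lia.
  assert (Rabs s ^ q <= 1). { rewrite <- (pow1 q). apply pow_incr. split. apply Rabs_pos. lra. }
  assert (Rabs (s ^ S q) < 1).
  { rewrite <- RPow_abs. simpl. pose proof (Rabs_pos s). nra. }
  apply Rabs_def2 in H0. lra.
Qed.

Lemma strict J s q0 : is_series (aJ J) 1 -> (1 <= q0)%nat -> J q0 <> 0 ->
  Rabs s < 1 -> aJ J q0 * (1 - s ^ q0) <= 1 - kappa J s /\ 0 < aJ J q0 * (1 - s ^ q0).
Proof.
  intros H Hq HJ Hs. assert (-1 <= s <= 1) by (apply Rabs_le_between; lra).
  split. rewrite one_minus by auto.
  apply (Series_ge_term (fun q => aJ J q * (1 - s ^ q))). intros; apply om_nonneg; auto.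
  apply ex_om; auto.
  apply Rmult_lt_0_compat. unfold aJ. apply Rmult_lt_0_compat.
  replace (J q0 ^ 2) with (Rsqr (J q0)) by (unfold Rsqr; ring). apply Rsqr_pos_lt; auto.
  apply Rinv_0_lt_compat, INR_fact_lt_0.
  pose proof (pow_lt1 s q0 Hs Hq). lra.
Qed.

Lemma rpow_pow kp a L : 0 < kp -> Rpower (kp ^ L) a = (Rpower kp a) ^ L.
Proof.
  intros H. rewrite <- (Rpower_pow L kp H). rewrite <- Rpower_pow by (unfold Rpower; apply exp_pos).
  rewrite !Rpower_mult. f_equal. ring.
Qed.

Lemma pos_limit (k : R -> R) kp C d rho t (l : R) :
 0 < kp < 1 -> 0 < C -> 0 < d -> 1 < rho ->
 (forall s, -1 <= s <= 1 -> -1 < k s /\ k s <= 1 /\ 1 - k s <= kp*(1-s)) ->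
 (forall s, -1 < s < 1 -> k s < 1) ->
 (forall s, -1 <= s -> 1 - d < s < 1 -> kp*(1-s) - C * Rpower (1-s) rho <= 1 - k s) ->
 -1 <= t <= 1 -> k t <> 1 ->
 is_lim_seq (fun L => / kp ^ L * (1 - Nat.iter L k t)) l -> 0 < l.
Proof.
  intros Hkp HC Hd Hr Hk Hks Has Ht Hkt Hl.
  set (x := fun L => Nat.iter L k t).
  set (v := fun L => / kp ^ L * (1 - x L)).
  assert (xS : forall L, x (S L) = k (x L)) by reflexivity.
  assert (xr : forall L, -1 <= x L <= 1).
  { induction L. simpl. exact Ht. rewrite xS. destruct (Hk _ IHL) as [? [? ?]]. lra. }
  assert (xs : forall L, -1 < x (S L) < 1).
  { induction L. rewrite xS. simpl. destruct (Hk _ Ht) as [? [? ?]]. split. lra.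
    destruct H0; [lra| contradiction].
    rewrite xS. destruct (Hk _ (xr (S L))) as [? [? ?]]. split. lra. apply Hks. lra. }
  assert (ub : forall L, 1 - x L <= 2 * kp ^ L).
  { induction L. simpl. lra. rewrite xS. destruct (Hk _ (xr L)) as [? [? ?]].
    simpl. nra. }
  set (th := Rpower kp (rho - 1)).
  assert (th0 : 0 < th) by (unfold th, Rpower; apply exp_pos).
  assert (th1 : th < 1).
  { unfold th, Rpower.
    assert (ln kp < 0) by (rewrite <- ln_1; apply ln_increasing; lra).
    assert (exp ((rho - 1) * ln kp) < exp 0) by (apply exp_increasing; nra).
    rewrite exp_0 in H0. exact H0. }
  set (M := C / kp * Rpower 2 (rho - 1)).
  assert (M0 : 0 < M).
  { unfold M. apply Rmult_lt_0_compat. apply Rdiv_lt_0_compat; lra. unfold Rpower; apply exp_pos. }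
  set (B := M / (1 - th)).
  assert (B0 : 0 < B) by (apply Rdiv_lt_0_compat; lra).
  assert (BM : B * (1 - th) = M) by (unfold B; field; lra).
  destruct (pow_lt_1_zero kp ltac:(rewrite Rabs_right; lra) (d/2) ltac:(lra)) as [N1 HN1].
  destruct (pow_lt_1_zero th ltac:(rewrite Rabs_right; lra) (/(2*B)) ltac:(apply Rinv_0_lt_compat; lra)) as [N2 HN2].
  set (L0 := S (Nat.max N1 N2)).
  assert (powle : forall a n m, 0 < a < 1 -> (n <= m)%nat -> a ^ m <= a ^ n).
  { intros a n m Ha Hnm. replace m with (n + (m - n))%nat by lia. rewrite pow_add.
    assert (a ^ (m - n) <= 1) by (rewrite <- (pow1 (m-n)); apply pow_incr; lra).
    pose proof (pow_lt a n ltac:(lra)). nra. }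
  assert (thL0 : B * th ^ L0 <= / 2).
  { assert (Rabs (th ^ L0) < / (2 * B)) by (apply HN2; lia).
    rewrite Rabs_right in H by (apply Rle_ge, pow_le; lra).
    apply Rmult_lt_compat_l with (r := B) in H; auto.
    replace (B * / (2 * B)) with (/2) in H by (field; lra). lra. }
  assert (step : forall L, (L0 <= L)%nat -> v L * (1 - M * th ^ L) <= v (S L)).
  { intros L HL. unfold v. rewrite xS.
    set (u := 1 - x L).
    assert (u0 : 0 < u). { unfold u. destruct L. lia. pose proof (xs L). lra. }
    assert (ud : u < d).
    { assert (Rabs (kp ^ L) < d/2) by (apply HN1; lia).
      rewrite Rabs_right in H by (apply Rle_ge, pow_le; lra). pose proof (ub L). unfold u. lra. }
    assert (E := Has (x L) ltac:(pose proof (xr L); lra) ltac:(unfold u in *; lra)).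
    fold u in E.
    assert (R1 : Rpower u rho <= u * (Rpower 2 (rho - 1) * th ^ L)).
    { replace rho with (1 + (rho - 1)) at 1 by ring. rewrite Rpower_plus, Rpower_1 by auto.
      apply Rmult_le_compat_l. lra.
      unfold th. rewrite <- rpow_pow by lra. rewrite Rpower_mult_distr by (try apply pow_lt; lra).
      apply Rle_Rpower_l. lra. split; auto. apply ub. }
    assert (R2 : kp * u * (1 - M * th ^ L) <= 1 - k (x L)).
    { unfold M. replace (kp * u * (1 - C / kp * Rpower 2 (rho - 1) * th ^ L))
        with (kp * u - C * (u * (Rpower 2 (rho - 1) * th ^ L))) by (field; lra).
      nra. }
    simpl pow. rewrite Rinv_mult.
    assert (0 < / kp ^ L) by (apply Rinv_0_lt_compat, pow_lt; lra).
    assert (0 < / kp) by (apply Rinv_0_lt_compat; lra).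
    replace (/ kp ^ L * u * (1 - M * th ^ L)) with (/ kp * / kp ^ L * (kp * u * (1 - M * th ^ L))) by (field; split; try apply pow_nonzero; lra).
    apply Rmult_le_compat_l. nra. exact R2. }
  set (F := fun n => 1 - B * (th ^ L0 - th ^ (L0 + n))).
  assert (F1 : forall n, F n <= 1).
  { intros n. unfold F. pose proof (powle th L0 (L0 + n)%nat ltac:(lra) ltac:(lia)). nra. }
  assert (F2 : forall n, / 2 <= F n).
  { intros n. unfold F. pose proof (pow_le th (L0 + n) ltac:(lra)). nra. }
  assert (FS : forall n, F (S n) = F n - M * th ^ (L0 + n)).
  { intros n. unfold F. rewrite Nat.add_succ_r. simpl pow. rewrite <- BM. ring. }
  assert (vpos : forall L, 0 <= v L).
  { intros L. unfold v. pose proof (xr L). apply Rmult_le_pos. apply Rlt_le, Rinv_0_lt_compat, pow_lt; lra. lra. }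
  assert (claim : forall n, v L0 * F n <= v (L0 + n)%nat).
  { induction n.
    - unfold F. rewrite Nat.add_0_r. replace (th ^ L0 - th ^ L0) with 0 by ring. lra.
    - rewrite FS, Nat.add_succ_r.
      pose proof (step (L0 + n)%nat ltac:(lia)) as St.
      assert (Mt : M * th ^ (L0 + n) <= / 2).
      { pose proof (powle th L0 (L0 + n)%nat ltac:(lra) ltac:(lia)).
        assert (M <= B). { rewrite <- BM. nra. }
        pose proof (pow_le th (L0 + n) ltac:(lra)). nra. }
      pose proof (pow_le th (L0 + n) ltac:(lra)).
      pose proof (F1 n). pose proof (F2 n). pose proof (vpos L0). pose proof (vpos (L0 + n)%nat).
      assert (0 <= M * th ^ (L0 + n)) by nra.
      assert (v L0 * F n * (1 - M * th ^ (L0 + n)) <= v (L0 + n)%nat * (1 - M * th ^ (L0 + n))).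
      { apply Rmult_le_compat_r; lra. }
      assert (0 <= v L0 * (M * th ^ (L0 + n)) * (1 - F n)) by (apply Rmult_le_pos; [apply Rmult_le_pos|]; lra).
      lra. }
  assert (vL0 : 0 < v L0).
  { unfold v. apply Rmult_lt_0_compat. apply Rinv_0_lt_compat, pow_lt; lra.
    unfold L0. pose proof (xs (Nat.max N1 N2)). lra. }
  apply (is_lim_seq_incr_n _ L0) in Hl.
  assert (HH : Rbar_le (v L0 / 2) l).
  { apply (is_lim_seq_le (fun _ => v L0 / 2) (fun n => / kp ^ (n + L0) * (1 - Nat.iter (n + L0) k t))).
    intros n. change (v L0 / 2 <= v (n + L0)%nat). rewrite Nat.add_comm.
    pose proof (claim n). pose proof (F2 n). assert (0 <= v L0 * (F n - /2)) by (apply Rmult_le_pos; lra). lra.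
    apply is_lim_seq_const. exact Hl. }
  simpl in HH. lra.
Qed.

Theorem lemma3p6 (J : nat -> R) (kp : R)
  (HJinf : forall N : nat, exists q : nat, (N <= q)%nat /\ J q <> 0)
  (Hsum : ex_series (fun q : nat => Rabs (J (S q)) / INR (fact q)))
  (Hk1 : is_series (fun q : nat => J q ^ 2 / INR (fact q)) 1)
  (Hkp_def : filterlim (fun s => (kappa J s - kappa J 1) / (s - 1))
                       (at_left 1) (locally kp))
  (Hkp : kp < 1) :
  (forall t : R, -1 <= t <= 1 ->
     exists l : R, 0 <= l /\
       is_lim_seq (fun L : nat => / kp ^ L * (1 - kappa_iter J L t)) l)
  /\
  (forall c rho : R, c <> 0 -> 1 < rho ->
     (forall eps : R, 0 < eps -> exists delta : R, 0 < delta /\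
        forall t : R, -1 <= t -> 1 - delta < t < 1 ->
          Rabs ((1 - kappa J t) - (kp * (1 - t) - c * Rpower (1 - t) rho))
            <= eps * Rpower (1 - t) rho) ->
     forall t : R, -1 <= t <= 1 ->
     forall l : R,
       is_lim_seq (fun L : nat => / kp ^ L * (1 - kappa_iter J L t)) l ->
       (l = 0 <-> kappa J t = 1)).
Proof.
  assert (H1 : is_series (aJ J) 1) by exact Hk1.
  assert (Hkey : forall s, -1 <= s <= 1 -> 1 - kappa J s <= kp * (1 - s))
    by (intros; apply key; auto).
  destruct (HJinf 1%nat) as [q0 [Hq0 HJq0]].
  assert (Hst := fun s => strict J s q0 H1 Hq0 HJq0).
  assert (K0 : 0 < 1 - kappa J 0).
  { destruct (Hst 0) as [A B]. rewrite Rabs_R0; lra. lra. }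
  assert (kp0 : 0 < kp). { pose proof (Hkey 0 ltac:(lra)). lra. }
  assert (Hk : forall s, -1 <= s <= 1 -> -1 < kappa J s /\ kappa J s <= 1 /\ 1 - kappa J s <= kp*(1-s)).
  { intros s Hs. pose proof (Hkey s Hs). pose proof (kappa_le1 J s H1 Hs).
    split; [nra | split; auto]. }
  assert (Hks : forall s, -1 < s < 1 -> kappa J s < 1).
  { intros s Hs. destruct (Hst s) as [A B]. apply Rabs_def1; lra. lra. }
  split.
  - intros t Ht.
    set (v := fun L : nat => / kp ^ L * (1 - kappa_iter J L t)).
    assert (xr : forall L, -1 <= kappa_iter J L t <= 1).
    { induction L. simpl. exact Ht. change (kappa_iter J (S L) t) with (kappa J (kappa_iter J L t)).
      destruct (Hk _ IHL) as [? [? ?]]. lra. }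
    assert (vpos : forall L, 0 <= v L).
    { intros L. unfold v. pose proof (xr L). apply Rmult_le_pos. apply Rlt_le, Rinv_0_lt_compat, pow_lt; lra. lra. }
    assert (vdec : forall L, v (S L) <= v L).
    { intros L. unfold v. change (kappa_iter J (S L) t) with (kappa J (kappa_iter J L t)).
      destruct (Hk _ (xr L)) as [? [? ?]]. simpl pow. rewrite Rinv_mult.
      assert (0 < / kp ^ L) by (apply Rinv_0_lt_compat, pow_lt; lra).
      assert (0 < / kp) by (apply Rinv_0_lt_compat; lra).
      replace (/ kp ^ L * (1 - kappa_iter J L t)) with (/ kp * / kp ^ L * (kp * (1 - kappa_iter J L t))) by (field; split; try apply pow_nonzero; lra).
      apply Rmult_le_compat_l. nra. exact H2. }
    destruct (ex_finite_lim_seq_decr v 0 vdec vpos) as [l Hl].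
    exists l. split; [| exact Hl].
    assert (HH : Rbar_le 0 l). { apply (is_lim_seq_le (fun _ => 0) v). exact vpos. apply is_lim_seq_const. exact Hl. }
    exact HH.
  - intros c rho Hc Hr Has t Ht l Hl. split.
    + intros l0. destruct (Req_dec (kappa J t) 1) as [E|E]; auto. exfalso.
      destruct (Has 1 Rlt_0_1) as [d [Hd Hd']].
      assert (P : 0 < l).
      { apply (pos_limit (kappa J) kp (Rabs c + 1) d rho t l); auto.
        all: try (split; lra). pose proof (Rabs_pos c). lra.
        intros s Hs1 Hs2. pose proof (Hd' s Hs1 Hs2) as A. apply Rabs_le_between in A.
        assert (0 <= Rpower (1 - s) rho) by (unfold Rpower; apply Rlt_le, exp_pos).
        pose proof (Rle_abs c). nra. }
      lra.
    + intros E.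
      assert (A : forall n, kappa_iter J (S n) t = 1).
      { induction n. exact E. change (kappa_iter J (S (S n)) t) with (kappa J (kappa_iter J (S n) t)).
        rewrite IHn. apply kappa1; auto. }
      apply is_lim_seq_incr_1 in Hl.
      assert (Hl0 : is_lim_seq (fun _ => 0) l).
      { apply (is_lim_seq_ext (fun n => / kp ^ S n * (1 - kappa_iter J (S n) t))). intros n. rewrite A. ring. exact Hl. }
      apply is_lim_seq_unique in Hl0. rewrite Lim_seq_const in Hl0. injection Hl0. auto.
Qed.
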